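(* Let $s,r\in\mathbb{N}$ and let $\mathcal{C}$ be a class of finite graphs such that each $G\in\mathcal{C}$ is obtained from some complete bipartite graph $K_{n,m}$ with $n\le m\le 2^{sn+r}$ by possibly adding new edges (on the same vertex set). Then $\mathcal{C}$ is $\mathrm{MSO}_2$-orderable.
   Context: For $G=\langle V,E\rangle$, $\lceil G\rceil=\langle V\cup E,\mathrm{inc}\rangle$ (universe $V\cup E$, incidence relation). An MSO-formula $\varphi(x,y;Z_0,\dots,Z_{k-1})$ defines an order on a class $\mathcal{K}$ of structures if for every non-empty $\mathfrak{A}\in\mathcal{K}$ there are $P_0,\dots,P_{k-1}\subseteq A$ with $\{(a,b):\mathfrak{A}\models\varphi(a,b;\bar P)\}$ a linear order on $A$. A graph class is $\mathrm{MSO}_2$-orderable if some MSO-formula defines an order on $\{\lceil G\rceil : G\in\mathcal{C}\}$. *)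

(* Defs.v *)
From mathcomp Require Import all_boot.
Set Implicit Arguments. Unset Strict Implicit. Unset Printing Implicit Defensive.

Record graph := Graph {
  gV :> finType;
  gadj : rel gV;
  gadj_sym : symmetric gadj;
  gadj_irr : irreflexive gadj }.

Definition is_edge (G : graph) (A : {set gV G}) : bool :=
  [exists u : gV G, exists v : gV G, gadj u v && (A == [set u; v])].
Definition edge_t (G : graph) : finType := {A : {set gV G} | is_edge A}.

(** Universe of the incidence structure [G] : V + E. *)
Definition inc_univ (G : graph) : finType := (gV G + edge_t G)%type.

Definition inc (G : graph) : rel (inc_univ G) :=
  fun x y => match x, y with
             | inl v, inr e => v \in val e
             | _, _ => false
             end.

(** Monadic second-order logic over one binary relation symbol R.
    First-order variables and set variables are indexed by nat (named variables). *)
Inductive mso : Type :=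
| MRel of nat & nat
| MEq of nat & nat
| MMem of nat & nat
| MNeg of mso
| MAnd of mso & mso
| MEx1 of nat & mso
| MEx2 of nat & mso.

Definition upd {A : Type} (f : nat -> A) (i : nat) (a : A) : nat -> A :=
  fun j => if j == i then a else f j.

Fixpoint msat (T : finType) (R : rel T) (phi : mso)
  (nu : nat -> T) (mu : nat -> {set T}) : Prop :=
  match phi with
  | MRel i j => R (nu i) (nu j)
  | MEq i j => nu i = nu j
  | MMem i j => nu i \in mu j
  | MNeg p => ~ msat R p nu mu
  | MAnd p q => msat R p nu mu /\ msat R q nu mu
  | MEx1 i p => exists a : T, msat R p (upd nu i a) mu
  | MEx2 j p => exists A : {set T}, msat R p nu (upd mu j A)
  end.

Fixpoint mso_scoped (fo so : nat -> bool) (phi : mso) : bool :=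
  match phi with
  | MRel i j | MEq i j => fo i && fo j
  | MMem i j => fo i && so j
  | MNeg p => mso_scoped fo so p
  | MAnd p q => mso_scoped fo so p && mso_scoped fo so q
  | MEx1 i p => mso_scoped (fun n => (n == i) || fo n) so p
  | MEx2 j p => mso_scoped fo (fun n => (n == j) || so n) p
  end.

(** phi(x,y; Z_0..Z_{k-1}): free FO variables among {0,1} (x = 0, y = 1),
    free set variables among {0,..,k-1}. *)
Definition mso_formula_xyZ (k : nat) (phi : mso) : bool :=
  mso_scoped (fun n => n < 2) (fun n => n < k) phi.

Definition linear_order (T : Type) (le : T -> T -> Prop) : Prop :=
  (forall a, le a a) /\
  (forall a b, le a b -> le b a -> a = b) /\
  (forall a b c, le a b -> le b c -> le a c) /\
  (forall a b, le a b \/ le b a).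

Definition defined_rel (T : finType) (R : rel T) (phi : mso)
  (P : nat -> {set T}) (a b : T) : Prop :=
  msat R phi (fun n => if n == 0 then a else b) P.

Definition defines_order_on (k : nat) (phi : mso) (T : finType) (R : rel T) : Prop :=
  exists P : nat -> {set T},
    (forall j, k <= j -> P j = set0) /\ linear_order (defined_rel R phi P).

Definition MSO2_orderable (C : graph -> Prop) : Prop :=
  exists (k : nat) (phi : mso), mso_formula_xyZ k phi /\
    forall G : graph, C G -> 0 < #|inc_univ G| -> defines_order_on k phi (@inc G).

Definition supergraph_of_Knm (G : graph) (n m : nat) : Prop :=
  exists A B : {set gV G},
    [disjoint A & B] /\ A :|: B = [set: gV G] /\ #|A| = n /\ #|B| = m /\
    (forall a b, a \in A -> b \in B -> gadj a b).

(* Main.v *)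
Require Import Defs.
From mathcomp Require Import all_boot zify.
From Stdlib Require Import Classical.
Set Implicit Arguments. Unset Strict Implicit. Unset Printing Implicit Defensive.

Definition MOr p q := MNeg (MAnd (MNeg p) (MNeg q)).
Definition MImp p q := MNeg (MAnd p (MNeg q)).
Definition MAll i p := MNeg (MEx1 i (MNeg p)).
Definition MTrue := MEx1 0 (MEq 0 0).
Definition MFalse := MNeg MTrue.
Definition bigAnd (l : seq nat) (F : nat -> mso) := foldr (fun t acc => MAnd (F t) acc) MTrue l.
Definition bigOr (l : seq nat) (F : nat -> mso) := foldr (fun t acc => MOr (F t) acc) MFalse l.

Lemma semOr (T : finType) (R : rel T) p q nu mu :
  msat R (MOr p q) nu mu <-> msat R p nu mu \/ msat R q nu mu.
Proof. simpl; tauto. Qed.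
Lemma semImp (T : finType) (R : rel T) p q nu mu :
  msat R (MImp p q) nu mu <-> (msat R p nu mu -> msat R q nu mu).
Proof. simpl; split; [|tauto]. intros H Hp; apply NNPP; tauto. Qed.
Lemma semAll (T : finType) (R : rel T) i p nu mu :
  msat R (MAll i p) nu mu <-> forall a, msat R p (upd nu i a) mu.
Proof. simpl; split.
- intros H a; apply NNPP; intro Hn; apply H; exists a; exact Hn.
- intros H [a Ha]; apply Ha, H.
Qed.
Lemma semTrue (T : finType) (R : rel T) nu mu : 0 < #|T| -> msat R MTrue nu mu.
Proof. move=> /card_gt0P [a _]; by exists a. Qed.
Lemma semBigAnd (T : finType) (R : rel T) l F nu mu : 0 < #|T| ->
  msat R (bigAnd l F) nu mu <-> forall t, t \in l -> msat R (F t) nu mu.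
Proof.
move=> HT; elim: l => [|p l IH] /=; first by split => // _; apply semTrue.
rewrite IH; split.
- move=> [Hp Hl] q; rewrite inE => /orP [/eqP -> //|]; exact: Hl.
- move=> H; split; first by apply H; rewrite inE eqxx.
  move=> q Hq; apply H; by rewrite inE Hq orbT.
Qed.
Lemma semBigOr (T : finType) (R : rel T) l F nu mu : 0 < #|T| ->
  msat R (bigOr l F) nu mu <-> exists2 t, t \in l & msat R (F t) nu mu.
Proof.
move=> HT; elim: l => [|p l IH].
  split => [/= H|[p]//]; exfalso; apply H; exact: semTrue.
change (msat R (MOr (F p) (bigOr l F)) nu mu <-> exists2 t, t \in p :: l & msat R (F t) nu mu); rewrite semOr IH; split.
- move=> [Hp|[q Hq Hq']]; first by exists p => //; rewrite inE eqxx.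
  by exists q => //; rewrite inE Hq orbT.
- move=> [q]; rewrite inE => /orP [/eqP -> |Hq] Hq'; [by left|right; by exists q].
Qed.

Definition colex (f g : nat -> bool) N := forall i, i < N -> f i -> ~~ g i ->
  exists j, [/\ i < j, j < N, g j & ~~ f j].
Definition num (f : nat -> bool) N := \sum_(i < N) f i * 2 ^ i.

Lemma numS f N : num f N.+1 = num f N + f N * 2 ^ N.
Proof. by rewrite /num big_ord_recr. Qed.

Lemma num_lt f N : num f N < 2 ^ N.
Proof.
elim: N => [|N IH]; first by rewrite /num big_ord0.
rewrite numS expnS; case: (f N) => /=; lia.
Qed.

Lemma colexP f g N : colex f g N <-> num f N <= num g N.
Proof.
elim: N => [|N IH]; first by rewrite /num !big_ord0; split => // _ i.
rewrite !numS; have hf := num_lt f N; have hg := num_lt g N.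
case Ef: (f N); case Eg: (g N) => /=.
- rewrite leq_add2r -IH; split => H i Hi Hfi Hgi.
    have [j [j1 j2 j3 j4]] := H i (ltnW Hi) Hfi Hgi.
    exists j; split => //; rewrite ltn_neqAle -ltnS j2 andbT.
    by apply/eqP => Ej; subst j; rewrite Ef in j4.
  have [Ei|Hi'] := eqVneq i N; first by subst; rewrite Eg in Hgi.
  have Hi2 : i < N by lia.
  have [j [j1 j2 j3 j4]] := H i Hi2 Hfi Hgi. exists j; split => //; lia.
- split => [H|]; last by lia.
  have [j [j1 j2 j3 j4]] := H N (ltnSn N) Ef (negbT Eg). lia.
- split => [_|_ i Hi Hfi Hgi]; first by lia.
  have [Ei|Hi'] := eqVneq i N; first by subst; rewrite Ef in Hfi.
  exists N; split; rewrite ?Eg ?Ef //; lia.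
- rewrite ?mul0n ?muln0 ?addn0 -IH; split => H i Hi Hfi Hgi.
    have [j [j1 j2 j3 j4]] := H i (ltnW Hi) Hfi Hgi.
    exists j; split => //; rewrite ltn_neqAle -ltnS j2 andbT.
    by apply/eqP => Ej; subst j; rewrite Eg in j3.
  have [Ei|Hi'] := eqVneq i N; first by subst; rewrite Ef in Hfi.
  have Hi2 : i < N by lia.
  have [j [j1 j2 j3 j4]] := H i Hi2 Hfi Hgi. exists j; split => //; lia.
Qed.

Lemma num_inj f g N : num f N = num g N -> forall i, i < N -> f i = g i.
Proof.
elim: N => [|N IH] // E i Hi.
move: E; rewrite !numS; have hf := num_lt f N; have hg := num_lt g N.
case Ef: (f N); case Eg: (g N) => /= E.
- have := IH ltac:(lia) i. have [->|] := eqVneq i N; first by rewrite Ef Eg.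
  move=> ? H; apply: H; lia.
- lia.
- lia.
- have := IH ltac:(lia) i. have [->|] := eqVneq i N; first by rewrite Ef Eg.
  move=> ? H; apply: H; lia.
Qed.

Definition bit (j p : nat) := odd (j %/ 2 ^ p).

Lemma bin_exp j N : num (bit j) N = j %% 2 ^ N.
Proof.
elim: N => [|N IH]; first by rewrite /num big_ord0 expn0 modn1.
rewrite numS IH /bit.
have e1 : j = j %/ 2 ^ N * 2 ^ N + j %% 2 ^ N by rewrite -divn_eq.
have e2 : j %/ 2 ^ N = (j %/ 2 ^ N.+1) * 2 + odd (j %/ 2 ^ N).
  by rewrite expnSr divnMA divn2 muln2 addnC odd_double_half.
have hm := ltn_pmod j (expn_gt0 2 N).
have e3 : j = j %/ 2 ^ N.+1 * 2 ^ N.+1 + (j %% 2 ^ N + odd (j %/ 2 ^ N) * 2 ^ N).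
  rewrite {1}e1 {1}e2 expnS; lia.
have hb : odd (j %/ 2 ^ N) <= 1 by case: odd.
have -> : j %% 2 ^ N.+1 = j %% 2 ^ N + odd (j %/ 2 ^ N) * 2 ^ N.
  rewrite {1}e3 modnMDl modn_small // expnS.
  move: hm hb; set a := j %% 2 ^ N; set b := odd _; set c := 2 ^ N. nia.
by [].
Qed.

Definition Isedge z := MEx1 2 (MRel 2 z).
Definition Fst u b := MEx1 6 (MAnd (MMem 6 1) (MAnd (MRel u 6) (MRel b 6))).
Definition Stair i j := MAll 5 (MImp (MNeg (MMem 5 0)) (MImp (Fst j 5) (Fst i 5))).
Definition Mem t a z := MEx1 9 (MAnd (MMem 9 t.+2) (MAnd (MRel a 9) (MRel z 9))).
Definition DifA t x y := MEx1 8 (MAnd (MMem 8 0) (MAnd (Mem t 8 y) (MNeg (Mem t 8 x)))).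
Definition Dif t x y := MOr (MAnd (MMem y t.+2) (MNeg (MMem x t.+2))) (DifA t x y).
Definition Above K t x y := bigOr (iota t.+1 (K - t.+1)) (fun t' => Dif t' x y).
Definition AbN K t x y := MOr (Above K t x y) (DifA t x y).
Definition AbA K t x y := MOr (Above K t x y)
  (MEx1 8 (MAnd (MMem 8 0) (MAnd (MNeg (Stair 8 7)) (MAnd (Mem t 8 y) (MNeg (Mem t 8 x)))))).
Definition Block K t x y :=
  MAnd (MImp (MAnd (MMem x t.+2) (MNeg (MMem y t.+2))) (AbN K t x y))
       (MAll 7 (MImp (MMem 7 0) (MImp (MAnd (Mem t 7 x) (MNeg (Mem t 7 y))) (AbA K t x y)))).
Definition ColexB K x y := bigAnd (iota 0 K) (fun t => Block K t x y).
Definition LeV K i j :=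
  MOr (MAnd (MMem i 0) (MNeg (MMem j 0)))
  (MOr (MAnd (MMem i 0) (MAnd (MMem j 0) (Stair i j)))
       (MAnd (MNeg (MMem i 0)) (MAnd (MNeg (MMem j 0)) (ColexB K i j)))).
Definition LeE K := MAll 3 (MImp (MAnd (MRel 3 0) (MNeg (MRel 3 1)))
  (MEx1 4 (MAnd (MNeg (LeV K 4 3)) (MAnd (MRel 4 1) (MNeg (MRel 4 0)))))).
Definition phi K :=
  MOr (MAnd (MNeg (Isedge 0)) (MAnd (MNeg (Isedge 1)) (LeV K 0 1)))
  (MOr (MAnd (MNeg (Isedge 0)) (Isedge 1))
       (MAnd (Isedge 0) (MAnd (Isedge 1) (LeE K)))).

Definition FstP (T : finType) (R : rel T) (P : nat -> {set T}) u b :=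
  exists e, e \in P 1 /\ R u e /\ R b e.
Definition StairP (T : finType) (R : rel T) (P : nat -> {set T}) x y :=
  forall b, ~ (b \in P 0) -> FstP R P y b -> FstP R P x b.
Definition MemP (T : finType) (R : rel T) (P : nat -> {set T}) t a z :=
  exists e, e \in P t.+2 /\ R a e /\ R z e.
Definition DifAP (T : finType) (R : rel T) (P : nat -> {set T}) t x y :=
  exists a, a \in P 0 /\ MemP R P t a y /\ ~ MemP R P t a x.
Definition DifP (T : finType) (R : rel T) (P : nat -> {set T}) t x y :=
  (y \in P t.+2 /\ ~ (x \in P t.+2)) \/ DifAP R P t x y.
Definition AboveP (T : finType) (R : rel T) (P : nat -> {set T}) K t x y :=
  exists2 t', t' \in iota t.+1 (K - t.+1) & DifP R P t' x y.
Definition AbAP (T : finType) (R : rel T) (P : nat -> {set T}) K t a x y :=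
  AboveP R P K t x y \/
  exists a', a' \in P 0 /\ ~ StairP R P a' a /\ MemP R P t a' y /\ ~ MemP R P t a' x.
Definition BlockP (T : finType) (R : rel T) (P : nat -> {set T}) K t x y :=
  ((x \in P t.+2 /\ ~ (y \in P t.+2)) -> AboveP R P K t x y \/ DifAP R P t x y) /\
  forall a, a \in P 0 -> (MemP R P t a x /\ ~ MemP R P t a y) -> AbAP R P K t a x y.
Definition ColexBP (T : finType) (R : rel T) (P : nat -> {set T}) K x y :=
  forall t, t \in iota 0 K -> BlockP R P K t x y.
Definition LeVP (T : finType) (R : rel T) (P : nat -> {set T}) K x y :=
  (x \in P 0 /\ ~ (y \in P 0)) \/ (x \in P 0 /\ y \in P 0 /\ StairP R P x y) \/
  (~ (x \in P 0) /\ ~ (y \in P 0) /\ ColexBP R P K x y).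
Definition LeEP (T : finType) (R : rel T) (P : nat -> {set T}) K x y :=
  forall v, (R v x /\ ~ R v y) -> exists w, ~ LeVP R P K w v /\ R w y /\ ~ R w x.
Definition IsedgeP (T : finType) (R : rel T) x := exists w, R w x.
Definition phiP (T : finType) (R : rel T) (P : nat -> {set T}) K x y :=
  (~ IsedgeP R x /\ ~ IsedgeP R y /\ LeVP R P K x y) \/
  (~ IsedgeP R x /\ IsedgeP R y) \/ (IsedgeP R x /\ IsedgeP R y /\ LeEP R P K x y).

Lemma updE (T : Type) (nu : nat -> T) i a : upd nu i a i = a.
Proof. by rewrite /upd eqxx. Qed.
Lemma updN (T : Type) (nu : nat -> T) i a j : j != i -> upd nu i a j = nu j.
Proof. by rewrite /upd => /negbTE ->. Qed.

Lemma all_iff (A : Type) (F G : A -> Prop) : (forall a, F a <-> G a) ->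
  (forall a, F a) <-> (forall a, G a).
Proof. move=> H; split => H' a; apply/H; exact: H'. Qed.
Lemma ex_iff (A : Type) (F G : A -> Prop) : (forall a, F a <-> G a) ->
  (exists a, F a) <-> (exists a, G a).
Proof. move=> H; split => -[a Ha]; exists a; exact/H. Qed.
Lemma and_iff A B C D : (A <-> C) -> (B <-> D) -> (A /\ B <-> C /\ D).
Proof. tauto. Qed.
Lemma or_iff A B C D : (A <-> C) -> (B <-> D) -> (A \/ B <-> C \/ D).
Proof. tauto. Qed.
Lemma imp_iff A B C D : (A <-> C) -> (B <-> D) -> ((A -> B) <-> (C -> D)).
Proof. tauto. Qed.
Lemma not_iff A C : (A <-> C) -> (~ A <-> ~ C).
Proof. tauto. Qed.

Lemma semFst (T : finType) (R : rel T) P nu u b : u != 6 -> b != 6 ->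
  msat R (Fst u b) nu P <-> FstP R P (nu u) (nu b).
Proof. move=> Hu Hb; rewrite /Fst /=. apply: ex_iff => e. rewrite /upd /= (negbTE Hu) (negbTE Hb). done. Qed.

Lemma semEx (T : finType) (R : rel T) i p nu mu :
  msat R (MEx1 i p) nu mu <-> exists a, msat R p (upd nu i a) mu.
Proof. by []. Qed.
Lemma semAnd (T : finType) (R : rel T) p q nu mu :
  msat R (MAnd p q) nu mu <-> msat R p nu mu /\ msat R q nu mu.
Proof. by []. Qed.
Lemma semNeg (T : finType) (R : rel T) p nu mu :
  msat R (MNeg p) nu mu <-> ~ msat R p nu mu.
Proof. by []. Qed.
Lemma semMMem (T : finType) (R : rel T) i j nu mu :
  msat R (MMem i j) nu mu <-> nu i \in mu j.
Proof. by []. Qed.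
Lemma semRel (T : finType) (R : rel T) i j nu mu :
  msat R (MRel i j) nu mu <-> R (nu i) (nu j).
Proof. by []. Qed.

Ltac updsimp := rewrite /upd /=; repeat match goal with
  H : is_true (negb (?a == ?b)) |- context [?a == ?b] => rewrite (negbTE H) end.

Lemma semStair (T : finType) (R : rel T) P nu i j : i != 5 -> i != 6 -> j != 5 -> j != 6 ->
  msat R (Stair i j) nu P <-> StairP R P (nu i) (nu j).
Proof.
move=> *; rewrite /Stair semAll /StairP; apply: all_iff => b.
rewrite !semImp !semFst //; updsimp; done.
Qed.

Lemma semMem (T : finType) (R : rel T) P nu t a z : a != 9 -> z != 9 ->
  msat R (Mem t a z) nu P <-> MemP R P t (nu a) (nu z).
Proof. move=> *; rewrite /Mem /=; apply: ex_iff => e; updsimp; done. Qed.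

Lemma semDifA (T : finType) (R : rel T) P nu t x y : x != 8 -> x != 9 -> y != 8 -> y != 9 ->
  msat R (DifA t x y) nu P <-> DifAP R P t (nu x) (nu y).
Proof.
move=> *; rewrite /DifA semEx; apply: ex_iff => a.
rewrite !semAnd semNeg semMMem !semMem //; updsimp; done.
Qed.

Lemma semDif (T : finType) (R : rel T) P nu t x y : x != 8 -> x != 9 -> y != 8 -> y != 9 ->
  msat R (Dif t x y) nu P <-> DifP R P t (nu x) (nu y).
Proof. move=> *; rewrite /Dif semOr semDifA //. Qed.

Lemma semAbove (T : finType) (R : rel T) P nu K t x y : 0 < #|T| ->
  x != 8 -> x != 9 -> y != 8 -> y != 9 ->
  msat R (Above K t x y) nu P <-> AboveP R P K t (nu x) (nu y).
Proof.
move=> HT *; rewrite /Above semBigOr //; split => -[t' H1 H2]; exists t' => //; exact/semDif.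
Qed.

Lemma semAbA (T : finType) (R : rel T) P nu K t x y : 0 < #|T| ->
  x \notin [:: 5; 6; 7; 8; 9] -> y \notin [:: 5; 6; 7; 8; 9] ->
  msat R (AbA K t x y) nu P <-> AbAP R P K t (nu 7) (nu x) (nu y).
Proof.
rewrite !inE !negb_or => HT /and5P [? ? ? ? ?] /and5P [? ? ? ? ?].
rewrite /AbA semOr semAbove //; apply: or_iff => //; rewrite semEx; apply: ex_iff => a.
rewrite !semAnd [msat _ (MNeg (Stair _ _)) _ _]semNeg semNeg semMMem !semMem // semStair //; updsimp; done.
Qed.

Lemma semBlock (T : finType) (R : rel T) P nu K t x y : 0 < #|T| ->
  x \notin [:: 5; 6; 7; 8; 9] -> y \notin [:: 5; 6; 7; 8; 9] ->
  msat R (Block K t x y) nu P <-> BlockP R P K t (nu x) (nu y).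
Proof.
move=> HT Hx Hy; move: (Hx) (Hy).
rewrite !inE !negb_or => /and5P [? ? ? ? ?] /and5P [? ? ? ? ?].
rewrite /Block /BlockP semAnd; apply: and_iff.
  by rewrite semImp /AbN semOr semAbove // semDifA // semAnd semNeg !semMMem.
rewrite semAll; apply: all_iff => a; rewrite semImp semImp semAbA //.
rewrite semAnd semNeg semMMem !semMem //; updsimp; done.
Qed.

Lemma semColexB (T : finType) (R : rel T) P nu K x y : 0 < #|T| ->
  x \notin [:: 5; 6; 7; 8; 9] -> y \notin [:: 5; 6; 7; 8; 9] ->
  msat R (ColexB K x y) nu P <-> ColexBP R P K (nu x) (nu y).
Proof.
move=> HT Hx Hy; rewrite /ColexB semBigAnd //; apply: all_iff => t.
by rewrite semBlock.
Qed.

Lemma semLeV (T : finType) (R : rel T) P nu K x y : 0 < #|T| ->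
  x \notin [:: 5; 6; 7; 8; 9] -> y \notin [:: 5; 6; 7; 8; 9] ->
  msat R (LeV K x y) nu P <-> LeVP R P K (nu x) (nu y).
Proof.
move=> HT Hx Hy; move: (Hx) (Hy).
rewrite !inE !negb_or => /and5P [? ? ? ? ?] /and5P [? ? ? ? ?].
rewrite /LeV !semOr !semAnd semStair // semColexB // !semNeg !semMMem.
Qed.

Lemma semLeE (T : finType) (R : rel T) P nu K : 0 < #|T| ->
  msat R (LeE K) nu P <-> LeEP R P K (nu 0) (nu 1).
Proof.
move=> HT; rewrite /LeE semAll; apply: all_iff => v.
rewrite semImp; apply: imp_iff; first by rewrite semAnd semNeg !semRel.
rewrite semEx; apply: ex_iff => w.
rewrite !semAnd; apply: and_iff; first by (change (~ msat R (LeV K 4 3) (upd (upd nu 3 v) 4 w) P <-> ~ LeVP R P K w v); apply: not_iff; rewrite semLeV //; updsimp).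
rewrite semNeg !semRel; updsimp; done.
Qed.

Lemma semIsedge (T : finType) (R : rel T) P nu z : z != 2 ->
  msat R (Isedge z) nu P <-> IsedgeP R (nu z).
Proof. move=> *; rewrite /Isedge semEx; apply: ex_iff => w; rewrite semRel; updsimp; done. Qed.

Lemma semPhi (T : finType) (R : rel T) P K a b : 0 < #|T| ->
  defined_rel R (phi K) P a b <-> phiP R P K a b.
Proof.
move=> HT; rewrite /defined_rel /phi /phiP.
set nu := fun n => _.
have ise : forall z, z != 2 -> (msat R (Isedge z) nu P <-> IsedgeP R (nu z)) by move=> z; apply: semIsedge.
rewrite semOr; apply: or_iff.
  rewrite semAnd; apply: and_iff; first by apply: not_iff; apply: ise.
  rewrite semAnd; apply: and_iff; first by apply: not_iff; apply: ise.
  by rewrite semLeV.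
rewrite semOr; apply: or_iff.
  by rewrite !semAnd !semNeg !ise.
rewrite !semAnd !ise // semLeE //.
Qed.

Lemma sc_bigAnd (fo so : nat -> bool) l F : (forall t, t \in l -> mso_scoped fo so (F t)) ->
  mso_scoped fo so (bigAnd l F).
Proof.
elim: l => [|t l IH] H /=; first by [].
rewrite H ?inE ?eqxx //= IH // => t' Ht'; apply: H; by rewrite inE Ht' orbT.
Qed.
Lemma sc_bigOr (fo so : nat -> bool) l F : (forall t, t \in l -> mso_scoped fo so (F t)) ->
  mso_scoped fo so (bigOr l F).
Proof.
elim: l => [|t l IH] H /=; first by [].
rewrite H ?inE ?eqxx //= IH // => t' Ht'; apply: H; by rewrite inE Ht' orbT.
Qed.

Lemma sc_Stair (fo so : nat -> bool) i j : fo i -> fo j -> so 0 -> so 1 -> mso_scoped fo so (Stair i j).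
Proof. by move=> Hi Hj H0 H1 /=; rewrite Hi Hj H0 H1 !orbT. Qed.

Lemma sc_Mem (fo so : nat -> bool) t a z : fo a -> fo z -> so t.+2 -> mso_scoped fo so (Mem t a z).
Proof. by move=> Ha Hz Ht /=; rewrite Ha Hz Ht !orbT. Qed.

Lemma sc_Block (fo so : nat -> bool) K t x y : fo x -> fo y -> so 0 -> so 1 -> (forall t', t' < K -> so t'.+2) ->
  t < K -> mso_scoped fo so (Block K t x y).
Proof.
move=> Hx Hy H0 H1 Hs Ht.
have HA : forall fo' : nat -> bool, fo' x -> fo' y -> mso_scoped fo' so (Above K t x y).
  move=> fo' Hx' Hy'; apply: sc_bigOr => t'; rewrite mem_iota => /andP [h1 h2].
  have ht' : t' < K by lia.
  by rewrite /= Hx' Hy' H0 !Hs // !orbT.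
rewrite /Block /= Hx Hy Hs // H0 !orbT /=.
rewrite !HA ?orbT ?Hx ?Hy //= ?Hx ?Hy ?orbT //= ?H0 ?H1 ?Hs ?orbT //.
Qed.

Lemma sc_LeV (fo so : nat -> bool) K x y : fo x -> fo y -> so 0 -> so 1 ->
  (forall t', t' < K -> so t'.+2) -> mso_scoped fo so (LeV K x y).
Proof.
move=> Hx Hy H0 H1 Hs.
have HC : mso_scoped fo so (ColexB K x y).
  apply: sc_bigAnd => t; rewrite mem_iota => /andP [_ h]; apply: sc_Block => //.
have HS := sc_Stair Hx Hy H0 H1.
rewrite /LeV [Stair _ _]lock [ColexB _ _ _]lock /= -!lock. by rewrite Hx Hy H0 HC HS.
Qed.

Lemma sc_phi K : mso_formula_xyZ K.+2 (phi K).
Proof.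
have Hs : forall t', t' < K -> t'.+2 < K.+2 by [].
rewrite /mso_formula_xyZ /phi [LeV K 0 1]lock [LeE K]lock /= -!lock.
rewrite sc_LeV //= andbT. apply: sc_bigAnd => t; rewrite mem_iota => /andP [_ h]; exact: sc_Block.
Qed.

Lemma decomp n1 q : 0 < n1 -> q = q %/ n1 * n1 + q %% n1 /\ q %% n1 < n1.
Proof. move=> h; split; [exact: divn_eq | exact: ltn_pmod]. Qed.

Definition Dq (f g : nat -> bool) q := g q && ~~ f q.

Definition Above' (f g : nat -> bool) K n t :=
  exists t', [/\ t < t', t' < K & exists o, o < n.+1 /\ Dq f g (t' * n.+1 + o)].

Definition Block' (f g : nat -> bool) K n t :=
  (f (t * n.+1) -> ~~ g (t * n.+1) ->
     Above' f g K n t \/ exists i, i < n /\ Dq f g (t * n.+1 + i.+1)) /\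
  (forall i, i < n -> f (t * n.+1 + i.+1) -> ~~ g (t * n.+1 + i.+1) ->
     Above' f g K n t \/ exists i', [/\ i < i', i' < n & Dq f g (t * n.+1 + i'.+1)]).

Lemma Above'E f g K n t : Above' f g K n t <->
  exists q, [/\ t.+1 * n.+1 <= q, q < K * n.+1 & Dq f g q].
Proof.
split.
- move=> [t' [h1 h2 [o [ho hd]]]]; exists (t' * n.+1 + o); split => //; nia.
- move=> [q [h1 h2 hd]]; have [e1 e2] := decomp q (ltn0Sn n).
  exists (q %/ n.+1); split; [nia|nia|]. exists (q %% n.+1); split => //; by rewrite -e1.
Qed.

Lemma blocks_colex f g K n : (forall t, t < K -> Block' f g K n t) <-> colex f g (K * n.+1).
Proof.
split.
- move=> H p hp hf hg; have [e1 e2] := decomp p (ltn0Sn n).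
  set t := p %/ n.+1 in e1 e2 *; set o := p %% n.+1 in e1 e2 *.
  have ht : t < K by nia.
  have [H1 H2] := H t ht.
  case: (posnP o) => ho.
    have hp' : p = t * n.+1 by rewrite e1 ho addn0.
    move: hf hg; rewrite hp' => hf hg.
    case: (H1 hf hg) => [/Above'E [q [q1 q2 q3]]|[i [hi hd]]].
      exists q; move: q3 => /andP [] *; split => //; nia.
    exists (t * n.+1 + i.+1); move: hd => /andP [] *; split => //; nia.
  have ho' : o = o.-1.+1 by lia.
  move: hf hg; rewrite e1 ho' => hf hg.
  case: (H2 o.-1 ltac:(lia) hf hg) => [/Above'E [q [q1 q2 q3]]|[i [hi1 hi2 hd]]].
    exists q; move: q3 => /andP [] *; split => //; nia.
  exists (t * n.+1 + i.+1); move: hd => /andP [] *; split => //; nia.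
- move=> H t ht; split.
  + move=> hf hg; have [q [q1 q2 q3 q4]] := H (t * n.+1) ltac:(nia) hf hg.
    have [e1 e2] := decomp q (ltn0Sn n).
    case: (ltnP q (t.+1 * n.+1)) => hq.
      right; exists (q - t * n.+1).-1; split; first nia.
      have -> : t * n.+1 + (q - t * n.+1).-1.+1 = q by nia.
      by apply/andP.
    left; apply/Above'E; exists q; split => //; exact/andP.
  + move=> i hi hf hg; have [q [q1 q2 q3 q4]] := H (t * n.+1 + i.+1) ltac:(nia) hf hg.
    case: (ltnP q (t.+1 * n.+1)) => hq.
      right; exists (q - t * n.+1).-1; split; [nia|nia|].
      have -> : t * n.+1 + (q - t * n.+1).-1.+1 = q by nia.
      by apply/andP.
    left; apply/Above'E; exists q; split => //; exact/andP.
Qed.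

Definition iA (G : graph) (A : {set gV G}) (v : gV G) := index v (enum A).

Lemma iA_lt (G : graph) (A : {set gV G}) v : v \in A -> iA A v < #|A|.
Proof. by move=> h; rewrite /iA cardE index_mem mem_enum. Qed.

Lemma iA_inj (G : graph) (A : {set gV G}) v w : v \in A -> w \in A -> iA A v = iA A w -> v = w.
Proof.
move=> hv hw e; apply: (index_inj v (s := enum A)); by rewrite ?mem_enum.
Qed.

Lemma iA_surj (G : graph) (A : {set gV G}) i : i < #|A| -> exists2 v, v \in A & iA A v = i.
Proof.
move=> hi; have [x0 _] : exists x0, x0 \in A by apply/card_gt0P; lia.
exists (nth x0 (enum A) i); first by rewrite -mem_enum mem_nth // -cardE.
by rewrite /iA index_uniq ?enum_uniq // -cardE.
Qed.

Definition Good (G : graph) (A B : {set gV G}) :=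
  [/\ [disjoint A & B], A :|: B = [set: gV G], #|A| <= #|B| &
      forall a b, a \in A -> b \in B -> gadj a b].

Lemma notA_B (G : graph) (A B : {set gV G}) v : Good A B -> (v \notin A) = (v \in B).
Proof.
move=> [hd hc _ _]; apply/idP/idP => h.
  by have := in_setT v; rewrite -hc in_setU (negbTE h).
by move: hd => /disjoint_setI0 /setP /(_ v); rewrite !inE h andbT => ->.
Qed.

Definition PA (G : graph) (A : {set gV G}) : {set inc_univ G} :=
  [set x | if x is inl v then v \in A else false].
Definition PF (G : graph) (A B : {set gV G}) : {set inc_univ G} :=
  [set x : inc_univ G | if x is inr e then [exists u, exists w,
     [&& u \in A, w \in B, iA A u <= iA B w, iA B w < #|A| & val e == [set u; w]]] else false].
Definition Pt (G : graph) (A B : {set gV G}) t : {set inc_univ G} :=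
  [set x : inc_univ G | match x with
   | inl v => (v \in B) && bit (iA B v) (t * (#|A|).+1)
   | inr e => [exists u, exists w, [&& u \in A, w \in B,
        bit (iA B w) (t * (#|A|).+1 + (iA A u).+1) & val e == [set u; w]]] end].
Definition Pars (G : graph) (A B : {set gV G}) K j :=
  if j == 0 then PA A else if j == 1 then PF A B else if j < K.+2 then Pt A B j.-2 else set0.

Lemma edge_ends (G : graph) (e : edge_t G) : exists u w, gadj u w /\ val e = [set u; w].
Proof. by case: e => S /= /existsP [u /existsP [w /andP [h /eqP ->]]]; exists u, w. Qed.

Lemma mkE (G : graph) (u w : gV G) : gadj u w -> exists e : edge_t G, val e = [set u; w].
Proof.
move=> h; have he : is_edge [set u; w] by apply/existsP; exists u; apply/existsP; exists w; rewrite h eqxx.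
by exists (exist (fun S => is_edge S) _ he).
Qed.

Lemma endsAB (G : graph) (A B : {set gV G}) u0 w0 x : Good A B ->
  u0 \in A -> w0 \in B -> x \in [set u0; w0] -> (x \in A -> x = u0) /\ (x \notin A -> x = w0).
Proof.
move=> hG hu hw; have hw' := notA_B w0 hG; rewrite hw in hw'.
rewrite !inE => /orP [/eqP ->|/eqP ->]; split => // h.
- by rewrite hu in h.
- by rewrite h in hw'.
Qed.

Lemma Pars0 (G : graph) (A B : {set gV G}) K : Pars A B K 0 = PA A. Proof. by []. Qed.
Lemma Pars1 (G : graph) (A B : {set gV G}) K : Pars A B K 1 = PF A B. Proof. by []. Qed.
Lemma ParsS (G : graph) (A B : {set gV G}) K t : t < K -> Pars A B K t.+2 = Pt A B t.
Proof. by move=> h; rewrite /Pars /= ifT. Qed.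

Lemma inPA (G : graph) (A : {set gV G}) x : (x \in PA A) = if x is inl v then v \in A else false.
Proof. by rewrite inE. Qed.

Lemma isedge_sem (G : graph) (x : inc_univ G) : IsedgeP (@inc G) x <-> (if x is inr _ then True else False).
Proof.
case: x => [v|e] /=; first by split => // -[[w|w] //].
split => // _; have [u [w [h he]]] := edge_ends e; exists (inl u); by rewrite /= he !inE eqxx.
Qed.

Lemma Fst_sem (G : graph) (A B : {set gV G}) K u w : Good A B -> u \in A -> w \notin A ->
  FstP (@inc G) (Pars A B K) (inl u) (inl w) <-> (iA A u <= iA B w /\ iA B w < #|A|).
Proof.
move=> hG hu hw; have hwB : w \in B by rewrite -(notA_B _ hG).
split.
- move=> [[x|e] [he [h1 h2]]] //; move: he; rewrite Pars1 inE.
  move=> /existsP [u0 /existsP [w0 /and5P [hu0 hw0 i1 i2 /eqP ev]]].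
  move: h1 h2; rewrite /= ev => h1 h2.
  have [e1 _] := endsAB hG hu0 hw0 h1; have [_ e2] := endsAB hG hu0 hw0 h2.
  by rewrite (e1 hu) (e2 hw).
- move=> [i1 i2]; have [hG1 hG2 hG3 hG4] := hG; have [e he] := mkE (hG4 _ _ hu hwB).
  exists (inr e); rewrite Pars1 inE /= he !inE !eqxx orbT; split => //.
  apply/existsP; exists u; apply/existsP; exists w; by rewrite hu hwB i1 i2 eqxx.
Qed.

Lemma Stair_sem (G : graph) (A B : {set gV G}) K u u' : Good A B -> u \in A -> u' \in A ->
  StairP (@inc G) (Pars A B K) (inl u) (inl u') <-> iA A u <= iA A u'.
Proof.
move=> hG hu hu'; have [hG1 hG2 hG3 hG4] := hG; split.
- move=> H; have [w hw hiw] : exists2 w, w \in B & iA B w = iA A u'.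
    apply: iA_surj; have := iA_lt hu'; lia.
  have hwA : w \notin A by rewrite (notA_B _ hG).
  have := H (inl w); rewrite Pars0 inPA => /(_ ltac:(by move=> /= h; rewrite h in hwA)).
  rewrite !Fst_sem // hiw => /(_ ltac:(split => //; exact: iA_lt)) [] //.
- move=> hle [w|e] hb; last by move=> [[x|x] [_ [_ //]]].
  have hwA : w \notin A by apply/negP => h; apply: hb; rewrite Pars0 inPA.
  rewrite !Fst_sem // => -[i1 i2]; split => //; lia.
Qed.

Lemma Mem_sem (G : graph) (A B : {set gV G}) K t u w : Good A B -> t < K -> u \in A -> w \in B ->
  MemP (@inc G) (Pars A B K) t (inl u) (inl w) <->
  bit (iA B w) (t * (#|A|).+1 + (iA A u).+1).
Proof.
move=> hG ht hu hwB; have [hG1 hG2 hG3 hG4] := hG.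
have hw : w \notin A by rewrite (notA_B _ hG).
split.
- move=> [[x|e] [he [h1 h2]]] //; move: he; rewrite ParsS // inE.
  move=> /existsP [u0 /existsP [w0 /and4P [hu0 hw0 i1 /eqP ev]]].
  move: h1 h2; rewrite /= ev => h1 h2.
  have [e1 _] := endsAB hG hu0 hw0 h1; have [_ e2] := endsAB hG hu0 hw0 h2.
  by rewrite (e1 hu) (e2 hw).
- move=> hb; have [e he] := mkE (hG4 _ _ hu hwB).
  exists (inr e); rewrite ParsS // inE /= he !inE !eqxx orbT; split => //.
  apply/existsP; exists u; apply/existsP; exists w; by rewrite hu hwB hb eqxx.
Qed.

Lemma Vb_sem (G : graph) (A B : {set gV G}) K t w : t < K -> w \in B ->
  (inl w \in Pars A B K t.+2) = bit (iA B w) (t * (#|A|).+1).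
Proof. by move=> ht hw; rewrite ParsS // inE hw. Qed.

Lemma DifA_sem (G : graph) (A B : {set gV G}) K t b b' : Good A B -> t < K -> b \in B -> b' \in B ->
  DifAP (@inc G) (Pars A B K) t (inl b) (inl b') <->
  exists i, i < #|A| /\ Dq (bit (iA B b)) (bit (iA B b')) (t * (#|A|).+1 + i.+1).
Proof.
move=> hG ht hb hb'; split.
- move=> [[u|e] [hu [h1 h2]]]; last by move: hu; rewrite Pars0 inPA.
  move: hu; rewrite Pars0 inPA => hu.
  move: h1 h2; rewrite !Mem_sem // => h1 h2.
  exists (iA A u); split; first exact: iA_lt.
  by rewrite /Dq h1; apply/negP.
- move=> [i [hi /andP [h1 h2]]]; have [u hu hiu] := iA_surj hi.
  exists (inl u); rewrite Pars0 inPA !Mem_sem // hiu; split => //; split => //; exact/negP.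
Qed.

Lemma Dif_sem (G : graph) (A B : {set gV G}) K t b b' : Good A B -> t < K -> b \in B -> b' \in B ->
  DifP (@inc G) (Pars A B K) t (inl b) (inl b') <->
  exists o, o < (#|A|).+1 /\ Dq (bit (iA B b)) (bit (iA B b')) (t * (#|A|).+1 + o).
Proof.
move=> hG ht hb hb'; rewrite /DifP DifA_sem // !Vb_sem //; split.
- move=> [[h1 h2]|[i [hi hd]]]; last by exists i.+1.
  exists 0; rewrite addn0 /Dq h1; split => //; exact/negP.
- move=> [[|o] [ho hd]].
    by left; move: hd; rewrite addn0 => /andP [h1 /negP h2].
  by right; exists o.
Qed.

Lemma Above_sem (G : graph) (A B : {set gV G}) K t b b' : Good A B -> b \in B -> b' \in B ->
  AboveP (@inc G) (Pars A B K) K t (inl b) (inl b') <->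
  Above' (bit (iA B b)) (bit (iA B b')) K #|A| t.
Proof.
move=> hG hb hb'; split.
- move=> [t' ht' hd]; move: ht'; rewrite mem_iota => /andP [h1 h2].
  have h3 : t' < K by lia.
  exists t'; split => //. by move: hd; rewrite Dif_sem.
- move=> [t' [h1 h2 hd]]; exists t'; first by rewrite mem_iota; apply/andP; split; lia.
  by rewrite Dif_sem.
Qed.

Lemma AbA_sem (G : graph) (A B : {set gV G}) K t u b b' : Good A B -> t < K -> u \in A ->
  b \in B -> b' \in B ->
  AbAP (@inc G) (Pars A B K) K t (inl u) (inl b) (inl b') <->
  Above' (bit (iA B b)) (bit (iA B b')) K #|A| t \/
  exists i', [/\ iA A u < i', i' < #|A| & Dq (bit (iA B b)) (bit (iA B b')) (t * (#|A|).+1 + i'.+1)].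
Proof.
move=> hG ht hu hb hb'; rewrite /AbAP Above_sem //; apply: or_iff => //; split.
- move=> [[u'|e] [hu' [hs [h1 h2]]]]; last by move: hu'; rewrite Pars0 inPA.
  move: hu'; rewrite Pars0 inPA => hu'.
  move: hs h1 h2; rewrite Stair_sem // !Mem_sem // => hs h1 h2.
  exists (iA A u'); split; [lia|exact: iA_lt|]. by rewrite /Dq h1; apply/negP.
- move=> [i [hi1 hi2 /andP [h1 h2]]]; have [u' hu' hiu] := iA_surj hi2.
  exists (inl u'); rewrite Pars0 inPA Stair_sem // !Mem_sem // hiu; split => //; split; first lia.
  split => //; exact/negP.
Qed.

Lemma Block_sem (G : graph) (A B : {set gV G}) K t b b' : Good A B -> t < K ->
  b \in B -> b' \in B ->
  BlockP (@inc G) (Pars A B K) K t (inl b) (inl b') <->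
  Block' (bit (iA B b)) (bit (iA B b')) K #|A| t.
Proof.
move=> hG ht hb hb'; rewrite /BlockP /Block'; apply: and_iff.
  rewrite !Vb_sem // Above_sem // DifA_sem //; split => [H h1 h2 | H [h1 h2]]; apply: H => //; [split => //; exact/negP | exact/negP].
split.
- move=> H i hi h1 h2; have [u hu hiu] := iA_surj hi.
  have := H (inl u); rewrite Pars0 inPA AbA_sem // !Mem_sem // hiu => H'.
  apply: H' => //; split => //; exact/negP.
- move=> H [u|e] hu; last by move: hu; rewrite Pars0 inPA.
  move: hu; rewrite Pars0 inPA => hu.
  rewrite AbA_sem // !Mem_sem // => -[h1 h2]; apply: H => //; [exact: iA_lt|exact/negP].
Qed.

Lemma ColexB_sem (G : graph) (A B : {set gV G}) K b b' : Good A B ->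
  b \in B -> b' \in B -> #|B| <= 2 ^ (K * (#|A|).+1) ->
  ColexBP (@inc G) (Pars A B K) K (inl b) (inl b') <-> iA B b <= iA B b'.
Proof.
move=> hG hb hb' hm.
have -> : (iA B b <= iA B b') = (num (bit (iA B b)) (K * (#|A|).+1) <= num (bit (iA B b')) (K * (#|A|).+1)).
  rewrite !bin_exp !modn_small //; apply: leq_trans hm; exact: iA_lt.
rewrite -colexP -blocks_colex; apply: all_iff => t; rewrite mem_iota add0n /=.
split => H ht; [exact/Block_sem/H | by apply/Block_sem => //; apply: H].
Qed.

Definition rk (G : graph) (A B : {set gV G}) v := if v \in A then iA A v else #|A| + iA B v.

Lemma rk_lt (G : graph) (A B : {set gV G}) v : Good A B -> rk A B v < #|A| + #|B|.
Proof.
move=> hG; rewrite /rk; case: ifP => h.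
  have := iA_lt h; lia.
have hB : v \in B by rewrite -(notA_B _ hG) h.
have := iA_lt hB; lia.
Qed.

Lemma rk_inj (G : graph) (A B : {set gV G}) v w : Good A B -> rk A B v = rk A B w -> v = w.
Proof.
move=> hG; rewrite /rk.
have hv := notA_B v hG; have hw := notA_B w hG.
case: ifP => h1; case: ifP => h2 e.
- exact: (iA_inj h1 h2 e).
- have := iA_lt h1; have := iA_lt (A := A) h1; lia.
- have := iA_lt h2; lia.
- apply: (iA_inj (A := B)); [by rewrite -hv h1|by rewrite -hw h2|lia].
Qed.

Lemma LeV_sem (G : graph) (A B : {set gV G}) K v w : Good A B -> #|B| <= 2 ^ (K * (#|A|).+1) ->
  LeVP (@inc G) (Pars A B K) K (inl v) (inl w) <-> rk A B v <= rk A B w.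
Proof.
move=> hG hm; rewrite /LeVP !Pars0 !inPA /rk.
have hv := notA_B v hG; have hw := notA_B w hG.
case: ifP => h1; case: ifP => h2.
- rewrite Stair_sem //; split => H; intuition.
- split => _; [have := iA_lt h1; lia | by left].
- split => H; last by (have := iA_lt h2; lia).
  by intuition.
- have hv' : v \in B by rewrite -hv h1.
  have hw' : w \in B by rewrite -hw h2.
  rewrite ColexB_sem // leq_add2l; split => H; intuition.
Qed.

Definition fe (G : graph) (A B : {set gV G}) (e : edge_t G) p :=
  [exists v, (v \in val e) && (rk A B v == p)].
Definition numE (G : graph) (A B : {set gV G}) (e : edge_t G) := num (fe A B e) (#|A| + #|B|).

Lemma fe_rk (G : graph) (A B : {set gV G}) e v : Good A B -> fe A B e (rk A B v) = (v \in val e).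
Proof.
move=> hG; apply/existsP/idP => [[v' /andP [h /eqP /(rk_inj hG) <-]] //|h].
by exists v; rewrite h eqxx.
Qed.

Lemma LeE_sem (G : graph) (A B : {set gV G}) K e e' : Good A B -> #|B| <= 2 ^ (K * (#|A|).+1) ->
  LeEP (@inc G) (Pars A B K) K (inr e) (inr e') <-> numE A B e <= numE A B e'.
Proof.
move=> hG hm; rewrite /numE -colexP; split.
- move=> H i hi /existsP [v /andP [hv /eqP hi']] hne.
  have hv' : v \notin val e' by rewrite -(fe_rk e' v hG) hi'.
  have [[w|w] [hw1 [hw2 hw3]]] := H (inl v) (conj hv (negP hv')) => //.
  move: hw1; rewrite LeV_sem // => hw1.
  exists (rk A B w); split; [lia|exact: rk_lt|by rewrite fe_rk|rewrite fe_rk //; apply/negP; exact: hw3].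
- move=> H [v|v] [h1 h2] //.
  have [j [j1 j2 /existsP [w /andP [hw /eqP hj]] j4]] :=
    H (rk A B v) (rk_lt v hG) ltac:(by rewrite (fe_rk e v hG)) ltac:(by rewrite (fe_rk e' v hG); apply/negP; exact: h2).
  exists (inl w); rewrite LeV_sem //; split; first lia.
  split => //=; apply/negP; by rewrite -(fe_rk e w hG) hj.
Qed.

Definition rkU (G : graph) (A B : {set gV G}) (x : inc_univ G) :=
  match x with inl v => rk A B v | inr e => #|A| + #|B| + numE A B e end.

Lemma phi_sem (G : graph) (A B : {set gV G}) K x y : Good A B -> #|B| <= 2 ^ (K * (#|A|).+1) ->
  phiP (@inc G) (Pars A B K) K x y <-> rkU A B x <= rkU A B y.
Proof.
move=> hG hm; rewrite /phiP !isedge_sem.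
case: x => [v|e]; case: y => [w|e'] /=.
- rewrite LeV_sem //; intuition.
- split => _; [have := rk_lt v hG; lia | by right; left; split => // -[]].
- split => [H|]; [intuition | have := rk_lt w hG; lia].
- rewrite LeE_sem // leq_add2l; intuition.
Qed.

Lemma rkU_inj (G : graph) (A B : {set gV G}) x y : Good A B -> rkU A B x = rkU A B y -> x = y.
Proof.
move=> hG; case: x => [v|e]; case: y => [w|e'] /= E.
- by rewrite (rk_inj hG E).
- have := rk_lt v hG; lia.
- have := rk_lt w hG; lia.
- have E' : numE A B e = numE A B e' by lia.
  have H := num_inj E'.
  congr inr; apply: val_inj; apply/setP => v.
  by rewrite -!(fe_rk _ v hG) H // rk_lt.
Qed.

Theorem lemma4p25 (s r : nat) (C : graph -> Prop) :
  (forall G : graph, C G ->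
     exists n m : nat, n <= m /\ m <= 2 ^ (s * n + r) /\ supergraph_of_Knm G n m) ->
  MSO2_orderable C.
Proof.
move=> HC; exists (s + r).+2, (phi (s + r)); split; first exact: sc_phi.
move=> G hCG hT; have [n [m [hnm [hm [A [B [hd [hc [hA [hB hadj]]]]]]]]]] := HC G hCG.
have hG : Good A B by split => //; rewrite hA hB.
have hm' : #|B| <= 2 ^ ((s + r) * (#|A|).+1).
  rewrite hB hA; apply: (leq_trans hm); rewrite leq_pexp2l //; nia.
exists (Pars A B (s + r)); split.
  move=> j hj; rewrite /Pars; case: ifP => [/eqP e|_]; first lia.
  case: ifP => [/eqP e|_]; first lia. by rewrite ltnNge hj.
have E : forall a b, defined_rel (@inc G) (phi (s + r)) (Pars A B (s + r)) a b <-> rkU A B a <= rkU A B b.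
  by move=> a b; rewrite semPhi // phi_sem.
split; [|split; [|split]].
- by move=> a; apply/E.
- move=> a b /E h1 /E h2; apply: (rkU_inj hG); lia.
- move=> a b c /E h1 /E h2; apply/E; lia.
- move=> a b; case: (leqP (rkU A B a) (rkU A B b)) => h; [left|right]; apply/E; lia.
Qed.
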